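(* Let $G$ be a finite group, $p$ a prime, and $n>0$ an integer with $\gcd(n,p)=1$. Then $P_e(G)\cong P_e(\mathbb{Z}_p\times\mathbb{Z}_p\times\mathbb{Z}_n)$ if and only if $G\cong \mathbb{Z}_p\times\mathbb{Z}_p\times\mathbb{Z}_n$.
   Context: All groups are finite. $\mathbb{Z}_k$ denotes the cyclic group of order $k$. For a group $X$, the enhanced power graph $P_e(X)$ is the simple graph with vertex set $X$ in which two distinct vertices $x,y$ are adjacent if and only if $\langle x,y\rangle$ is cyclic. *)

(* Defs.v *)
From mathcomp Require Import all_boot all_fingroup all_solvable all_algebra.
Set Implicit Arguments. Unset Strict Implicit. Unset Printing Implicit Defensive.
Local Open Scope group_scope.

Definition epg_adj (gT : finGroupType) (x y : gT) : bool :=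
  (x != y) && cyclic <<[set x; y]>>.

Definition epg_iso (gT hT : finGroupType) (G : {set gT}) (H : {set hT}) : Prop :=
  exists f : gT -> hT,
    [/\ {in G &, injective f}, f @: G = H &
        {in G &, forall x y, epg_adj (f x) (f y) = epg_adj x y}].

(* Zp k is the full additive group of integers mod k for k > 1 and trivial
   for k = 1, so this is correct for every n > 0 and prime p. *)
Definition ZpZpZn (p n : nat) : {set 'Z_p * ('Z_p * 'Z_n)} :=
  setX (Zp p) (setX (Zp p) (Zp n)).

(* Main.v *)
Require Import Defs.
From mathcomp Require Import all_boot all_fingroup all_solvable all_algebra.
From mathcomp Require Import zify ring.
Local Open Scope group_scope.

Module Aux.
Set Implicit Arguments. Unset Strict Implicit. Unset Printing Implicit Defensive.
Import GRing.Theory.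

Lemma in_setAP (T : finType) (A : {set T}) (P : pred T) y :
  (y \in [set z in A | P z]) = (y \in A) && P y.
Proof. by rewrite inE. Qed.

Section Gen.
Variable gT : finGroupType.
Implicit Types G A : {set gT}.

Definition nb G (x : gT) := [set y in G | cyclic <<[set x; y]>>].
Definition domv G := [set x in G | G \subset nb G x].
Definition clq A := {in A &, forall y z, cyclic <<[set y; z]>>}.

Lemma cyc_refl (x : gT) : cyclic <<[set x; x]>>.
Proof. by rewrite setUid cycle_cyclic. Qed.

Lemma cyc_sym (x y : gT) : cyclic <<[set x; y]>> = cyclic <<[set y; x]>>.
Proof. by rewrite setUC. Qed.

Lemma nb_sym G x y : x \in G -> y \in G -> (y \in nb G x) = (x \in nb G y).
Proof. by move=> xG yG; rewrite !inE xG yG cyc_sym. Qed.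

Lemma domvS G x : x \in domv G -> x \in G.
Proof. by rewrite inE => /andP[]. Qed.

Lemma nbE G x y : (y \in nb G x) = (y \in G) && cyclic <<[set x; y]>>.
Proof. by rewrite inE. Qed.

Lemma nb_self G x : x \in G -> x \in nb G x.
Proof. by move=> xG; rewrite inE xG cyc_refl. Qed.
End Gen.

Section Transport.
Variables (gT hT : finGroupType) (G : {set gT}) (H : {set hT}) (f : gT -> hT).
Hypotheses (finj : {in G &, injective f}) (fim : f @: G = H)
  (fadj : {in G &, forall x y, epg_adj (f x) (f y) = epg_adj x y}).

Lemma tr_cyc x y : x \in G -> y \in G ->
  cyclic <<[set f x; f y]>> = cyclic <<[set x; y]>>.
Proof.
move=> xG yG; have := fadj xG yG; rewrite /epg_adj.
have [->|nxy] := eqVneq x y; first by rewrite !cyc_refl.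
have -> : f x != f y by apply: contra nxy => /eqP /finj; move=> /(_ xG yG) ->.
by [].
Qed.

Lemma fG x : x \in G -> f x \in H.
Proof. by move=> xG; rewrite -fim imset_f. Qed.

Lemma tr_nb x : x \in G -> f @: nb G x = nb H (f x).
Proof.
move=> xG; apply/setP=> z; apply/imsetP/idP.
  by case=> y; rewrite inE => /andP[yG c] ->; rewrite inE fG // tr_cyc.
rewrite inE => /andP[]; rewrite -fim => /imsetP[y yG ->] c.
by exists y => //; rewrite inE yG -tr_cyc.
Qed.

Lemma tr_card_nb x : x \in G -> #|nb H (f x)| = #|nb G x|.
Proof.
move=> xG; rewrite -tr_nb // card_in_imset //.
by move=> a b; rewrite !inE => /andP[aG _] /andP[bG _]; apply: finj.
Qed.

Lemma tr_dom x : x \in G -> (f x \in domv H) = (x \in domv G).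
Proof.
move=> xG; rewrite !inE xG fG //= -tr_nb // -fim.
apply/subsetP/subsetP => S z.
  move=> zG; have := S (f z) (imset_f _ zG); case/imsetP => w; rewrite inE => /andP[wG c] e.
  have -> : z = w by apply: finj. 
  by rewrite inE wG c.
by case/imsetP=> w wG ->; apply: imset_f; apply: S.
Qed.

Lemma tr_card_dom : #|domv H| = #|domv G|.
Proof.
have -> : domv H = f @: domv G.
  apply/setP=> z; apply/idP/imsetP.
    move=> zD; have : z \in H by move: zD; rewrite inE => /andP[].
    rewrite -fim => /imsetP[x xG e]; exists x => //; by rewrite -tr_dom // -e.
  case=> x xD ->; have xG : x \in G by move: xD; rewrite inE => /andP[].
  by rewrite tr_dom.
by rewrite card_in_imset // => a b; rewrite !inE => /andP[aG _] /andP[bG _]; apply: finj.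
Qed.

Lemma tr_clq x : x \in G -> clq (nb H (f x)) -> clq (nb G x).
Proof.
move=> xG C y z yN zN.
have yG : y \in G by move: yN; rewrite inE => /andP[].
have zG : z \in G by move: zN; rewrite inE => /andP[].
rewrite -tr_cyc //; apply: C; rewrite -tr_nb //; exact: imset_f.
Qed.

Lemma tr_card : #|H| = #|G|.
Proof. by rewrite -fim card_in_imset. Qed.
End Transport.

Section GSide.
Variables (gT : finGroupType) (G : {group gT}).

Lemma gen2_sub (K : {group gT}) x y : x \in K -> y \in K -> <<[set x; y]>> \subset K.
Proof. by move=> xK yK; rewrite gen_subG subUset !sub1set xK yK. Qed.

Lemma gen2_l (x y : gT) : x \in <<[set x; y]>>.
Proof. by apply: mem_gen; rewrite !inE eqxx. Qed.
Lemma gen2_r (x y : gT) : y \in <<[set x; y]>>.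
Proof. by apply: mem_gen; rewrite !inE eqxx orbT. Qed.

Lemma nbG x y : y \in nb G x -> y \in G.
Proof. by rewrite inE => /andP[]. Qed.

Lemma nbC x y : y \in nb G x -> cyclic <<[set x; y]>>.
Proof. by rewrite inE => /andP[]. Qed.

Lemma clq_cyc x : x \in G -> clq (nb G x) -> exists c, nb G x = <[c]>.
Proof.
move=> xG C.
have xN : x \in nb G x by exact: nb_self.
case: (@arg_maxnP _ x (mem (nb G x)) (fun y => #|<<[set x; y]>>|) xN).
move=> y yN ymax.
have := nbC yN.
case/cyclicP=> c Ec.
have yG := nbG yN.
have xc : x \in <[c]> by rewrite -Ec gen2_l.
have cN : <[c]> \subset nb G x.
  apply/subsetP=> z zc; rewrite inE.
  have sCG : <[c]> \subset G by rewrite -Ec gen2_sub.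
  rewrite (subsetP sCG) //=.
  apply: cyclicS (cycle_cyclic c).
  by rewrite gen_subG subUset !sub1set zc andbT; exact: xc.
exists c; apply/eqP; rewrite eqEsubset cN andbT.
apply/subsetP=> z zN.
have cN' : c \in nb G x by rewrite (subsetP cN) // cycle_id.
have := C _ _ cN' zN; case/cyclicP=> w Ew.
have xw : x \in <[w]>.
  rewrite -Ew; apply: (subsetP (_ : <[c]> \subset _)); last by rewrite -Ec gen2_l.
  by rewrite cycle_subG gen2_l.
have wG : w \in G by rewrite (subsetP (gen2_sub (nbG cN') (nbG zN))) // Ew cycle_id.
have Exw : <<[set x; w]>> = <[w]>.
  apply/eqP; rewrite eqEsubset gen_subG subUset !sub1set xw cycle_id /=.
  by rewrite cycle_subG gen2_r.
have wN : w \in nb G x by rewrite inE wG Exw cycle_cyclic.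
have := ymax w wN; rewrite Exw Ec => le.
have scw : <[c]> \subset <[w]> by rewrite -Ew cycle_subG gen2_l.
have Ecw : <[c]> = <[w]>.
  by apply/eqP; rewrite eqEcard scw /=; exact: le.
by rewrite Ecw -Ew gen2_r.
Qed.
End GSide.

Lemma Zp_cyc k : cyclic (Zp k).
Proof. by rewrite /Zp; case: ifP => _; [rewrite Zp_cycle cycle_cyclic | exact: cyclic1]. Qed.

Section GMain.
Variables (gT : finGroupType) (G : {group gT}) (p n : nat).
Hypotheses (pr : prime p) (n0 : 0 < n) (cnp : coprime n p)
  (cG : #|G| = (p ^ 2 * n)%N) (cD : #|domv G| = n)
  (hN : forall x, x \in G -> x \notin domv G -> clq (nb G x) /\ #|nb G x| = (p * n)%N).

Lemma p_gt1 : 1 < p. Proof. exact: prime_gt1. Qed.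
Lemma p_gt0 : 0 < p. Proof. exact: prime_gt0. Qed.

Lemma domG x : x \in domv G -> x \in G.
Proof. by rewrite inE => /andP[]. Qed.

Lemma dom_nb x y : x \in domv G -> y \in G -> x \in nb G y.
Proof.
move=> xD yG; have xG := domG xD; rewrite nb_sym //.
by move: xD; rewrite inE => /andP[_ /subsetP]; apply.
Qed.

Lemma nondom_ex : exists2 y, y \in G & y \notin domv G.
Proof.
have : ~~ (G \subset domv G).
  apply/negP=> /subset_leq_card; rewrite cG cD.
  have := p_gt1; rewrite expnS expn1; move=> h1 h2; nia.
by case/subsetPn=> y; exists y.
Qed.

Lemma nondom_cyc y : y \in G -> y \notin domv G ->
  exists2 c, nb G y = <[c]> & #[c] = (p * n)%N.
Proof.
move=> yG yD; have [C cN] := hN yG yD.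
have [c Ec] := clq_cyc yG C.
by exists c => //; rewrite -cN Ec.
Qed.

Lemma ord_all g : g \in G -> #[g] %| p * n.
Proof.
move=> gG.
have [gD | gD] := boolP (g \in domv G).
  have [y yG yD] := nondom_ex.
  have [c Ec oc] := nondom_cyc yG yD.
  have gc : g \in <[c]> by rewrite -Ec dom_nb.
  by rewrite -oc; exact: order_dvdG gc.
have [c Ec oc] := nondom_cyc gG gD.
have gc : g \in <[c]> by rewrite -Ec nb_self.
by rewrite -oc; exact: order_dvdG gc.
Qed.

Lemma ord_p g : g \in G -> #[g] %| p ^ 2 -> #[g] %| p.
Proof.
move=> gG d2; have d1 := ord_all gG.
have : #[g] %| gcdn (p ^ 2) (p * n) by rewrite dvdn_gcd d2 d1.
by rewrite expnS expn1 -muln_gcdr; move: cnp; rewrite coprime_sym /coprime => /eqP ->; rewrite muln1.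
Qed.


Lemma syl_card (S : {group gT}) : p.-Sylow(G) S -> #|S| = (p ^ 2)%N.
Proof.
move=> sylS; rewrite (card_Hall sylS) cG p_part mulnC logn_Gauss; last first.
  by rewrite coprime_sym.
by rewrite lognX logn_prime // eqxx muln1.
Qed.

Lemma nbdom x y : x \in domv G -> y \in G -> y \in nb G x.
Proof. by move=> xD yG; move: xD; rewrite inE => /andP[_ /subsetP]; apply. Qed.

Lemma dom_p' g : g \in domv G -> ~~ (p %| #[g]).
Proof.
move=> gD; apply/negP => pg; have gG := domG gD.
have og : 0 < #[g] := order_gt0 g.
have e : #[g] = (#[g] %/ p * p)%N by rewrite divnK.
have q0 : 0 < #[g] %/ p by rewrite divn_gt0 ?p_gt0 // dvdn_leq.
set u := g ^+ (#[g] %/ p).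
have ou : #[u] = p.
  rewrite orderXdiv; last by rewrite {2}e dvdn_mulr.
  by rewrite {1}e mulKn.
have uG : u \in G by rewrite groupX.
have uD : u \in domv G.
  rewrite inE uG; apply/subsetP => z zG; rewrite inE zG.
  apply: cyclicS (nbC (nbdom gD zG)).
  by rewrite gen_subG subUset !sub1set gen2_r groupX ?gen2_l.
have pu : p.-group <[u]> by rewrite /pgroup -/(#[u]) ou pnat_id.
have sU : <[u]> \subset G by rewrite cycle_subG.
have [S sylS uS] := Sylow_superset sU pu.
have cS := syl_card sylS.
have sSG := pHall_sub sylS.
have : ~~ (S \subset <[u]>).
  apply/negP => /subset_leq_card; rewrite cS; change ((p ^ 2)%N <= #[u] -> False); rewrite ou.
  have := p_gt1; rewrite expnS expn1 => h1 h2; nia.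
case/subsetPn => v vS vu.
have vG : v \in G by rewrite (subsetP sSG).
have := nbC (nbdom uD vG); case/cyclicP => w Ew.
have wS : w \in S by rewrite (subsetP (gen2_sub (subsetP uS u (cycle_id u : u \in <[u]>%G)) vS)) // Ew cycle_id.
have wG : w \in G by rewrite (subsetP sSG).
have ow : #[w] %| p by apply: ord_p => //; rewrite -cS; exact: order_dvdG wS.
have suw : <[u]> \subset <[w]> by rewrite -Ew cycle_subG gen2_l.
have Euw : <[u]> = <[w]>.
  apply/eqP; rewrite eqEcard suw /=; change (#[w] <= #[u]); rewrite ou; exact: dvdn_leq p_gt0 ow.
by move: vu; rewrite Euw -Ew gen2_r.
Qed.

Lemma dom_cyc : exists2 d, domv G = <[d]> & #[d] = n.
Proof.
have [y yG yD] := nondom_ex.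
have [c Ec oc] := nondom_cyc yG yD.
have od : #[c ^+ p] = n by rewrite orderXdiv oc ?dvdn_mulr // mulKn ?p_gt0.
exists (c ^+ p) => //.
have sub : domv G \subset <[c ^+ p]>.
  apply/subsetP => g gD.
  have gc : g \in <[c]> by rewrite -Ec; exact: dom_nb gD yG.
  have og : #[g] %| n.
    have := ord_all (domG gD); rewrite Gauss_dvdr //.
    by rewrite coprime_sym prime_coprime // dom_p'.
  case/cycleP: gc => i ei.
  have : c ^+ (i * n) == 1 by rewrite expgM -ei -order_dvdn.
  rewrite -order_dvdn oc dvdn_pmul2r // => pi.
  by rewrite ei -(divnK pi) mulnC expgM mem_cycle.
apply/eqP; rewrite eqEcard sub /= -/(#[c ^+ p]) od cD leqnn //.
Qed.

Lemma dom_cent : domv G \subset 'C(G).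
Proof.
apply/centsP => g gD z zG.
have ab := cyclic_abelian (nbC (nbdom gD zG)).
exact: (centsP ab) g (gen2_l g z) z (gen2_r g z).
Qed.


Lemma gside : G \isog ZpZpZn p n.
Proof.
have [d Ed od] := dom_cyc.
have [S sylS] := Sylow_exists p G.
have cS := syl_card sylS; have sSG := pHall_sub sylS.
have abS := card_p2group_abelian pr cS.
have ordS s : s \in S -> #[s] %| p.
  move=> sS; apply: ord_p; first by rewrite (subsetP sSG).
  by rewrite -cS; exact: order_dvdG sS.
have ordS1 s : s \in S -> s != 1 -> #[s] = p.
  move=> sS s1; apply/(prime_nt_dvdP pr); first by rewrite order_eq1.
  exact: ordS.
have : S :!=: 1.
  apply/eqP => S1; move: cS; rewrite S1 cards1 => h; have := p_gt1.
  move: h; rewrite expnS expn1 => h1 h2; nia.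
case/trivgPn => u uS u1.
have ou := ordS1 u uS u1.
have : ~~ (S \subset <[u]>).
  apply/negP => /subset_leq_card; rewrite cS; change ((p ^ 2)%N <= #[u] -> False); rewrite ou.
  have := p_gt1; rewrite expnS expn1 => h1 h2; nia.
case/subsetPn => v vS vu.
have v1 : v != 1 by apply: contraNneq vu => ->; rewrite group1.
have ov := ordS1 v vS v1.
have TI1 : <[u]> :&: <[v]> = 1.
  rewrite setIC; apply: prime_TIg; first by rewrite -/(#[v]) ov.
  by rewrite cycle_subG.
have cuv : <[v]> \subset 'C(<[u]>) by apply: sub_abelian_cent2 abS _ _; rewrite cycle_subG.
have hS : <[u]> \x <[v]> = S.
  rewrite dprodE //; apply/eqP; rewrite eqEcard mul_subG ?cycle_subG //=.
  by rewrite TI_cardMg // cS -/(#[u]) -/(#[v]) ou ov expnS expn1.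
have sdG : <[d]> \subset G by rewrite -Ed; apply/subsetP => z; exact: domG.
have cdS : <[d]> \subset 'C(S).
  by apply: subset_trans (centS sSG); rewrite -Ed dom_cent.
have cop : coprime #|S| #|<[d]>|.
  by rewrite cS -/(#[d]) od coprimeXl // coprime_sym.
have hG : S \x <[d]> = G.
  rewrite dprodE ?coprime_TIg //; apply/eqP; rewrite eqEcard mul_subG //=.
  by rewrite TI_cardMg ?coprime_TIg // cS -/(#[d]) od cG.
have cvd : <[d]> \subset 'C(<[v]>).
  by apply: subset_trans cdS _; apply: centS; rewrite cycle_subG.
have TI2 : <[v]> :&: <[d]> = 1.
  apply: coprime_TIg; rewrite -/(#[v]) -/(#[d]) ov od coprime_sym //.
have hK : <[v]> \x <[d]> = (<[v]> <*> <[d]>)%G by rewrite dprodEY.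
rewrite -hS -dprodA hK in hG.
rewrite /ZpZpZn.
apply: (isog_dprod hG (setX_dprod (Zp_group p) (setX_group (Zp_group p) (Zp_group n)))).
  apply: (isog_trans (H := Zp_group p)); last exact: isog_setX1.
  by rewrite isog_cyclic_card ?cycle_cyclic // Zp_cyc card_Zp ?p_gt0 // -/(#[u]) ou eqxx.
apply: (isog_trans (H := setX_group (Zp_group p) (Zp_group n))); last exact: isog_set1X.
apply: (isog_dprod hK (setX_dprod (Zp_group p) (Zp_group n))).
  apply: (isog_trans (H := Zp_group p)); last exact: isog_setX1.
  by rewrite isog_cyclic_card ?cycle_cyclic // Zp_cyc card_Zp ?p_gt0 // -/(#[v]) ov eqxx.
apply: (isog_trans (H := Zp_group n)); last exact: isog_set1X.
by rewrite isog_cyclic_card ?cycle_cyclic // Zp_cyc card_Zp // -/(#[d]) od eqxx.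
Qed.

End GMain.

Lemma pair_expg (aT bT : finGroupType) (g : aT * bT) i : g ^+ i = (g.1 ^+ i, g.2 ^+ i).
Proof.
elim: i => [|i IH]; first by rewrite !expg0; case: g.
by rewrite !expgS IH.
Qed.

Lemma fst_expg (aT bT : finGroupType) (g : aT * bT) i : (g ^+ i).1 = g.1 ^+ i.
Proof. by rewrite pair_expg. Qed.
Lemma snd_expg (aT bT : finGroupType) (g : aT * bT) i : (g ^+ i).2 = g.2 ^+ i.
Proof. by rewrite pair_expg. Qed.

Lemma Zp_expr k (a : 'I_k.+1) i : a ^+ i = (a *+ i)%R.
Proof. by rewrite Zp_expg Zp_mulrn. Qed.

Lemma pair_expg3 (A B C : finGroupType) (a : A) (b : B) (c : C) m :
  (a, (b, c)) ^+ m = (a ^+ m, (b ^+ m, c ^+ m)).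
Proof. by rewrite pair_expg /= pair_expg. Qed.

Lemma Zp_mulrn_mod q (x : 'Z_q) m r : 1 < q -> m = r %[mod q] -> (x *+ m = x *+ r)%R.
Proof.
move=> q1 e; rewrite -(mulr_natr x m) -(mulr_natr x r) -(Zp_nat_mod q1 m) e (Zp_nat_mod q1 r) //.
Qed.

Lemma aux_det (R : comRingType) (a b : R) i j : (a *+ i * (b *+ j) - a *+ j * (b *+ i) = 0)%R.
Proof. by rewrite mulrnAl mulrnAr mulrnAl mulrnAr mulrnAC subrr. Qed.

Lemma findk (R : comUnitRingType) (a b z1 z2 : R) :
  (a \is a GRing.unit) || (b \is a GRing.unit) -> (a * z2 - z1 * b = 0)%R ->
  exists k, z1 = (k * a)%R /\ z2 = (k * b)%R.
Proof.
move=> u /subr0_eq e; case/orP: u => u.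
  exists (z1 / a)%R; split; first by rewrite mulrVK.
  by rewrite -(mulKr u z2) e; ring.
exists (z2 / b)%R; split; last by rewrite mulrVK.
by rewrite -(mulrK u z1) -e; ring.
Qed.

Lemma det_trans (R : comUnitRingType) (a b c d e f : R) :
  (a \is a GRing.unit) || (b \is a GRing.unit) ->
  (a * d - c * b = 0)%R -> (a * f - e * b = 0)%R -> (c * f - e * d = 0)%R.
Proof.
move=> u e1 e2; case/orP: u => u.
  apply: (mulrI u); rewrite mulr0.
  have -> : (a * (c * f - e * d) = c * (a * f - e * b) - e * (a * d - c * b))%R.
    by ring.
  by rewrite e1 e2 !mulr0 subrr.
apply: (mulrI u); rewrite mulr0.
have -> : (b * (c * f - e * d) = d * (a * f - e * b) - f * (a * d - c * b))%R.
  by ring.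
by rewrite e1 e2 !mulr0 subrr.
Qed.

Lemma memX3 (A B C : finType) (SA : {set A}) (SB : {set B}) (SC : {set C}) y :
  (y \in setX SA (setX SB SC)) = [&& y.1 \in SA, y.2.1 \in SB & y.2.2 \in SC].
Proof. by case: y => ? [? ?]; rewrite !in_setX. Qed.

Lemma aux2 (R : comRingType) (a b k : R) : (a * (k * b) - k * a * b = 0)%R.
Proof. by ring. Qed.

Section TSide.
Variables (p n : nat).
Hypotheses (pr : prime p) (n0 : 0 < n) (cnp : coprime n p).
Local Notation hT := ('Z_p * ('Z_p * 'Z_n))%type.
Local Notation T := (ZpZpZn p n).

Definition det (x y : hT) : 'Z_p := (x.1 * y.2.1 - y.1 * x.2.1)%R.

Lemma det_pow (g : hT) i j : det (g ^+ i) (g ^+ j) = 0%R.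
Proof.
rewrite /det !fst_expg !snd_expg !fst_expg. rewrite (Zp_expr g.1 i) (Zp_expr g.1 j) (Zp_expr g.2.1 i) (Zp_expr g.2.1 j).
exact: aux_det.
Qed.

Lemma p1 : 1 < p. Proof. exact: prime_gt1. Qed.
Lemma cpn : coprime p n. Proof. by rewrite coprime_sym. Qed.

Lemma Zp_unit (a : 'Z_p) : a != 0%R -> a \is a GRing.unit.
Proof.
move=> a0; rewrite -(natr_Zp a) unitZpE ?p1 // prime_coprime //.
have ap : (a : nat) < p by apply: leq_trans (ltn_ord a) _; rewrite Zp_cast ?p1.
have a0' : 0 < (a : nat).
  rewrite lt0n; apply: contra a0 => /eqP h; apply/eqP; exact: val_inj.
by rewrite gtnNdvd.
Qed.

Lemma unit_or (a b : 'Z_p) : (a != 0%R) || (b != 0%R) ->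
  (a \is a GRing.unit) || (b \is a GRing.unit).
Proof. by case/orP => h; apply/orP; [left | right]; exact: Zp_unit. Qed.

Definition c0 : 'Z_n := if 1 < n then 1%R else 0%R.

Lemma in_line (a b k : 'Z_p) (z : hT) : z \in T -> z.1 = (k * a)%R -> z.2.1 = (k * b)%R ->
  z \in <[(a, (b, c0))]>.
Proof.
case: z => z1 [z2 z3] /=; rewrite /ZpZpZn !in_setX /= => /and3P[_ _ z3n] e1 e2.
apply/cycleP; exists (chinese p n k z3).
rewrite pair_expg3 (Zp_expr a) (Zp_expr b) (Zp_expr c0).
have Hm := chinese_modl cpn k z3.
congr (_, (_, _)).
- by rewrite e1 (Zp_mulrn_mod a p1 Hm) -(mulr_natr a k) natr_Zp mulrC.
- by rewrite e2 (Zp_mulrn_mod b p1 Hm) -(mulr_natr b k) natr_Zp mulrC.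
rewrite /c0; case: ifP => n1.
  have Hn := chinese_modr cpn k z3.
  by rewrite (Zp_mulrn_mod _ n1 Hn) natr_Zp.
move: z3n; rewrite /Zp n1 => /set1P ->; by rewrite mul0rn.
Qed.


Lemma det_anti x y : det y x = (- det x y)%R.
Proof. by rewrite /det opprB. Qed.

Lemma both_line (a b : 'Z_p) x y : x \in T -> y \in T ->
  (exists k, x.1 = (k * a)%R /\ x.2.1 = (k * b)%R) ->
  (exists k, y.1 = (k * a)%R /\ y.2.1 = (k * b)%R) ->
  cyclic <<[set x; y]>>.
Proof.
move=> xT yT [k [e1 e2]] [l [f1 f2]].
apply: cyclicS (cycle_cyclic (a, (b, c0))).
by rewrite gen_subG subUset !sub1set (in_line xT e1 e2) (in_line yT f1 f2).
Qed.

Lemma cyc_det x y : x \in T -> y \in T -> cyclic <<[set x; y]>> = (det x y == 0%R).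
Proof.
move=> xT yT; apply/idP/eqP.
  case/cyclicP => g Eg.
  have /cycleP[i ei] : x \in <[g]> by rewrite -Eg gen2_l.
  have /cycleP[j ej] : y \in <[g]> by rewrite -Eg gen2_r.
  by rewrite ei ej det_pow.
move=> d0.
have [hx|hx] := boolP ((x.1 != 0%R) || (x.2.1 != 0%R)).
  apply: (both_line (a := x.1) (b := x.2.1)) => //.
    by exists 1%R; rewrite !mul1r.
  exact: findk (unit_or hx) d0.
have [hy|hy] := boolP ((y.1 != 0%R) || (y.2.1 != 0%R)).
  apply: (both_line (a := y.1) (b := y.2.1)) => //; last first.
    by exists 1%R; rewrite !mul1r.
  apply: findk (unit_or hy) _.
  by have := det_anti x y; rewrite d0 oppr0.
move: hx hy; rewrite !negb_or !negbK => /andP[/eqP x1 /eqP x2] /andP[/eqP y1 /eqP y2].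
apply: (both_line (a := 1%R) (b := 0%R)) => //.
  by exists 0%R; rewrite x1 x2 !mul0r.
by exists 0%R; rewrite y1 y2 !mul0r.
Qed.

Lemma memT (a b : 'Z_p) (c : 'Z_n) : c \in Zp n -> (a, (b, c)) \in T.
Proof. by move=> cn; rewrite /ZpZpZn !in_setX /= cn !mem_Zp ?p1. Qed.

Lemma dom_T x : x \in T -> (x \in domv T) = (x.1 == 0%R) && (x.2.1 == 0%R).
Proof.
move=> xT; apply/idP/idP; last first.
  case/andP => /eqP x1 /eqP x2.
  rewrite inE xT; apply/subsetP => y yT; rewrite inE yT cyc_det // /det x1 x2.
  by rewrite mul0r mulr0 subrr.
apply: contraLR; rewrite negb_and => hx.
set y : hT := if x.2.1 != 0%R then (1%R, (0%R, 1%g)) else (0%R, (1%R, 1%g)).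
have yT : y \in T by rewrite /y; case: ifP => _; apply: memT; exact: group1.
have dy : det x y != 0%R.
  rewrite /y /det; case: ifP => h /=.
    by rewrite mulr0 mul1r sub0r oppr_eq0.
  move: hx; rewrite h orbF => h1.
  by rewrite mulr1 mul0r subr0.
rewrite inE xT /=; apply/negP => /subsetP /(_ y yT).
by rewrite inE yT cyc_det // (negbTE dy).
Qed.

Lemma card_T : #|T| = (p ^ 2 * n)%N.
Proof. by rewrite /ZpZpZn !cardsX !card_Zp ?(prime_gt0 pr) // mulnA expnS expn1. Qed.

Lemma card_dom : #|domv T| = n.
Proof.
have -> : domv T = [set z in T | (z.1 == 0%R) && (z.2.1 == 0%R)].
  apply/setP => z; case zT: (z \in T); first by rewrite dom_T // inE zT.
  by rewrite in_set zT /= in_set zT.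
have -> : [set z in T | (z.1 == 0%R) && (z.2.1 == 0%R)] = setX [set 0%R] (setX [set 0%R] (Zp n)).
  apply/setP => z; case: z => a [b c]; rewrite !inE /= (mem_Zp a p1) (mem_Zp b p1) /=.
  by case: (a == 0%R); case: (b == 0%R); case: (c \in Zp n).
by rewrite !cardsX !cards1 card_Zp // !mul1n.
Qed.

Lemma nb_T x : x \in T -> nb T x = [set y in T | det x y == 0%R].
Proof.
move=> xT; apply/setP => y; rewrite nbE in_setAP.
by case yT: (y \in T) => //=; rewrite cyc_det.
Qed.

Lemma clq_T x : x \in T -> (x.1 != 0%R) || (x.2.1 != 0%R) -> clq (nb T x).
Proof.
move=> xT hx y z; rewrite !nb_T // !in_setAP => /andP[yT /eqP dy] /andP[zT /eqP dz].
by rewrite cyc_det //; apply/eqP; exact: det_trans (unit_or hx) dy dz.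
Qed.

Lemma card_nb x : x \in T -> (x.1 != 0%R) || (x.2.1 != 0%R) -> #|nb T x| = (p * n)%N.
Proof.
move=> xT hx.
pose F (kc : 'Z_p * 'Z_n) : hT := ((kc.1 * x.1)%R, ((kc.1 * x.2.1)%R, kc.2)).
have -> : nb T x = F @: setX (Zp p) (Zp n).
  apply/setP => y; rewrite nb_T // in_setAP; apply/andP/imsetP.
    case=> yT /eqP dy; have [k [e1 e2]] := findk (unit_or hx) dy.
    exists (k, y.2.2).
      move: yT; rewrite /ZpZpZn memX3 => /and3P[_ _ h].
      by rewrite in_setX mem_Zp ?p1.
    by rewrite /F /= -e1 -e2; case: y {e1 e2 dy yT} => ? [].
  case=> [[k c]]; rewrite in_setX => /andP[_ cn] ->; split.
    exact: memT.
  by rewrite /det /F /=; apply/eqP; exact: aux2.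
rewrite card_in_imset ?cardsX ?card_Zp ?(prime_gt0 pr) //.
move=> [k c] [l d] _ _ e.
have e1 : (k * x.1 = l * x.1)%R := f_equal fst e.
have e2 : (k * x.2.1 = l * x.2.1)%R := f_equal (fun u => u.2.1) e.
have e3 : c = d := f_equal (fun u => u.2.2) e.
congr (_, _); last exact: e3.
by case/orP: (unit_or hx) => u; [exact: (mulIr u e1) | exact: (mulIr u e2)].
Qed.

End TSide.

End Aux.
Import Aux.

Theorem theorem7 (gT : finGroupType) (G : {group gT}) (p n : nat) :
  prime p -> 0 < n -> coprime n p ->
  (epg_iso G (ZpZpZn p n) <-> G \isog ZpZpZn p n).
Proof.
move=> pr n0 cnp; split.
  case=> f [finj fim fadj].
  apply: (gside pr n0 cnp).
  - by rewrite -(tr_card finj fim) card_T.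
  - by rewrite -(tr_card_dom finj fim fadj) card_dom.
  move=> x xG xD.
  have fxT := fG fim xG.
  have fxD : f x \notin domv (ZpZpZn p n) by rewrite (tr_dom finj fim fadj).
  have hx : ((f x).1 != 0%R) || ((f x).2.1 != 0%R).
    by move: fxD; rewrite dom_T // negb_and.
  split; first exact: (tr_clq finj fim fadj xG (clq_T pr cnp fxT hx)).
  by rewrite -(tr_card_nb finj fim fadj xG) card_nb.
rewrite /ZpZpZn; case/isogP => h injh imh.
exists h; split.
- exact: (injmP injh).
- by rewrite -morphimEdom.
move=> x y xG yG; rewrite /epg_adj (inj_in_eq (injmP injh)) //.
have sxy : [set x; y] \subset G by rewrite subUset !sub1set xG yG.
by rewrite -(morphim_set1 h xG) -(morphim_set1 h yG) -morphimU -morphim_gen // injm_cyclic // gen_subG.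
Qed.
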